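(* Let $\mathbb{C}$ be an isostable squares category. For every $n\ge0$, the forgetful functor $U_n:S^{\square}_n\mathbb{C}\to\mathcal{V}_n\mathbb{C}$, sending an object $(A_{jk})$ to its rightmost column $A_{0n}\twoheadrightarrow A_{1n}\twoheadrightarrow\cdots\twoheadrightarrow A_{n-1,n}\twoheadrightarrow A_{nn}=O$, is an equivalence of categories.
   Context: A squares category is a flat double category (squares uniquely determined by their boundary; we say a boundary ''is a square'') with a distinguished object $O$ initial in the horizontal category $\mathcal{H}_{\mathbb{C}}$ (morphisms $\rightarrowtail$) and terminal in the vertical category $\mathcal{V}_{\mathbb{C}}$ (morphisms $\twoheadrightarrow$). A vertical $f:A\twoheadrightarrow B$ is a vertical weak equivalence if the boundary (top $O\rightarrowtail A$, left $\mathrm{id}_O$, right $f$, bottom $O\rightarrowtail B$) is a square; a horizontal $g:A\rightarrowtail B$ is a horizontal weak equivalence if the boundary (top $g$, left $A\twoheadrightarrow O$, right $B\twoheadrightarrow O$, bottom $\mathrm{id}_O$) is a square. Vertical natural transformations between double functors of flat double categories: vertical components $\tau_A$ with $(Ff,\tau_A,\tau_{A'},Gf)$ a square for each horizontal $f$ and commuting naturality squares in the vertical category; $\mathrm{Fun}^v$ is the functor category. With $\boxdot$ the flat double category generated by one square (corners $a,b,c,d$, horizontal $a\rightarrowtail b,c\rightarrowtail d$, vertical $a\twoheadrightarrow c,b\twoheadrightarrow d$), $i:\mathrm{span}\hookrightarrow\boxdot$ on $a\rightarrowtail b,a\twoheadrightarrow c$ and $j:\mathrm{cospan}\hookrightarrow\boxdot$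 on $b\twoheadrightarrow d,c\rightarrowtail d$: a squares category is stable if (i) $i^*$ on $\mathrm{Fun}^v(-,\mathbb{C})$ has a section functor $s$, (ii) there is a natural transformation $w:si^*\Rightarrow\mathrm{id}$ with components the identity at $a,b,c$, (iii) $j^*$ has a section functor $t$, (iv) there is a natural transformation $u:tj^*\Rightarrow\mathrm{id}$ with components the identity at $b,c,d$ and a vertical weak equivalence at $a$. It is isostable if it is stable, its weak equivalences are invertible, and for every boundary with top $f:A\rightarrowtail B$, bottom $k:C\rightarrowtail D$ and vertical isomorphisms $g:A\twoheadrightarrow C$, $h:B\twoheadrightarrow D$, this boundary is a square iff the boundary with top $k$, left $g^{-1}$, right $h^{-1}$, bottom $f$ is a square. $S^{\square}_n\mathbb{C}$: objects are families $(A_{jk})_{0\le j\le k\le n}$ with $A_{jj}=O$, horizontal $A_{jk}\rightarrowtail A_{j,k+1}$, vertical $A_{jk}\twoheadrightarrow A_{j+1,k}$, each unit cell ($j<k<n$) a square; morphisms are families of vertical morphisms $A_{jk}\twoheadrightarrow A'_{jk}$ such that every cell formed with a horizontal generator is a square and every cell formed with a vertical generator commutes in $\mathcal{V}_{\mathbb{C}}$ (their components are vertical weak equivalences). $\mathcal{V}_n\mathbb{C}$ is the category whose objects are sequences $A_1\twoheadrightarrow\cdots\twoheadrightarrow A_n\twoheadrightarrow O$ of vertical morphisms and whose morphisms are families of vertical weak equivalences $A_i\twoheadrightarrow A_i'$ making all the resulting squares commute in $\mathcal{V}_{\mathbb{C}}$. *)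

(* Defs.v *)
From Stdlib Require Import ProofIrrelevance FunctionalExtensionality.
From mathcomp Require Import all_boot.
Set Implicit Arguments. Unset Strict Implicit. Unset Printing Implicit Defensive.

(* ccomp f g = "first f, then g".                                      *)
Record Cat := BuildCat {
  ob : Type;
  hom : ob -> ob -> Type;
  cid : forall a, hom a a;
  ccomp : forall a b c, hom a b -> hom b c -> hom a c;
  ccomp_id_l : forall a b (f : hom a b), ccomp (cid a) f = f;
  ccomp_id_r : forall a b (f : hom a b), ccomp f (cid b) = f;
  ccomp_assoc : forall a b c d (f : hom a b) (g : hom b c) (h : hom c d),
      ccomp (ccomp f g) h = ccomp f (ccomp g h) }.
Arguments hom {_} _ _.
Arguments cid {_} _.
Arguments ccomp {_ _ _ _} _ _.

Record Functor (C D : Cat) := BuildFunctor {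
  fobj :> ob C -> ob D;
  fhom : forall a b, hom a b -> hom (fobj a) (fobj b);
  fhom_id : forall a, fhom (cid a) = cid (fobj a);
  fhom_comp : forall a b c (f : hom a b) (g : hom b c),
      fhom (ccomp f g) = ccomp (fhom f) (fhom g) }.
Arguments fhom {_ _} _ {_ _} _.

Definition IdF (C : Cat) : Functor C C.
Proof.
refine (@BuildFunctor C C (fun a => a) (fun a b f => f) _ _); by [].
Defined.

Definition CompF (C D E : Cat) (F : Functor C D) (G : Functor D E) : Functor C E.
Proof.
refine (@BuildFunctor C E (fun a => G (F a)) (fun a b f => fhom G (fhom F f)) _ _).
- by move=> a; rewrite !fhom_id.
- by move=> a b c f g; rewrite !fhom_comp.
Defined.

Record NatIso (C D : Cat) (F G : Functor C D) := BuildNatIso {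
  ni_fwd : forall a, hom (F a) (G a);
  ni_bwd : forall a, hom (G a) (F a);
  ni_fb : forall a, ccomp (ni_fwd a) (ni_bwd a) = cid (F a);
  ni_bf : forall a, ccomp (ni_bwd a) (ni_fwd a) = cid (G a);
  ni_nat : forall a b (f : hom a b),
      ccomp (fhom F f) (ni_fwd b) = ccomp (ni_fwd a) (fhom G f) }.

Definition is_equivalence (C D : Cat) (F : Functor C D) : Prop :=
  exists G : Functor D C,
    inhabited (NatIso (IdF C) (CompF F G)) /\
    inhabited (NatIso (CompF G F) (IdF D)).

(* Flat double categories.  Horizontal morphisms dH (>->), vertical    *)
(* morphisms dV (->>), both with diagrammatic composition.  Squares    *)
(* are a Prop-valued predicate on boundaries (flatness):               *)
(*   dSq top left right bottom,                                        *)
(*   top : a >-> b, left : a ->> c, right : b ->> d, bottom : c >-> d. *)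
Record FlatDouble := BuildFlatDouble {
  dob : Type;
  dH : dob -> dob -> Type;
  idH : forall a, dH a a;
  compH : forall a b c, dH a b -> dH b c -> dH a c;
  compH_id_l : forall a b (f : dH a b), compH (idH a) f = f;
  compH_id_r : forall a b (f : dH a b), compH f (idH b) = f;
  compH_assoc : forall a b c d (f : dH a b) (g : dH b c) (h : dH c d),
      compH (compH f g) h = compH f (compH g h);
  dV : dob -> dob -> Type;
  idV : forall a, dV a a;
  compV : forall a b c, dV a b -> dV b c -> dV a c;
  compV_id_l : forall a b (f : dV a b), compV (idV a) f = f;
  compV_id_r : forall a b (f : dV a b), compV f (idV b) = f;
  compV_assoc : forall a b c d (f : dV a b) (g : dV b c) (h : dV c d),
      compV (compV f g) h = compV f (compV g h);
  dSq : forall a b c d, dH a b -> dV a c -> dV b d -> dH c d -> Prop;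
  sq_idH : forall a c (v : dV a c), dSq (idH a) v v (idH c);
  sq_idV : forall a b (h : dH a b), dSq h (idV a) (idV b) h;
  sq_compH : forall a b e c d f (t : dH a b) (t' : dH b e) (l : dV a c)
      (m : dV b d) (r : dV e f) (u : dH c d) (u' : dH d f),
      dSq t l m u -> dSq t' m r u' ->
      dSq (compH t t') l r (compH u u');
  sq_compV : forall a b c d e f (t : dH a b) (l : dV a c) (r : dV b d)
      (m : dH c d) (l' : dV c e) (r' : dV d f) (u : dH e f),
      dSq t l r m -> dSq m l' r' u ->
      dSq t (compV l l') (compV r r') u }.
Arguments dH {_} _ _.
Arguments dV {_} _ _.
Arguments idH {_} _.
Arguments idV {_} _.
Arguments compH {_ _ _ _} _ _.
Arguments compV {_ _ _ _} _ _.
Arguments dSq {_ _ _ _ _} _ _ _ _.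

Record SquaresCat := BuildSquaresCat {
  sqd :> FlatDouble;
  sO : dob sqd;
  zH : forall A, dH sO A;
  zH_uniq : forall A (f : dH sO A), f = zH A;
  zV : forall A, dV A sO;
  zV_uniq : forall A (f : dV A sO), f = zV A }.
Arguments zH {_} _.
Arguments zV {_} _.

Section SquaresCategories.
Variable C : SquaresCat.
Local Notation Ob := (dob C).
Local Notation H := (@dH C).
Local Notation V := (@dV C).
Local Notation O := (sO C).

Definition vwe (A B : Ob) (f : V A B) : Prop :=
  dSq (zH A) (idV O) f (zH B).
Definition hwe (A B : Ob) (g : H A B) : Prop :=
  dSq g (zV A) (zV B) (idH O).

(* ---- the vertical functor categories Fun^v(span,C), Fun^v(cospan,C),
        Fun^v(box,C), written out explicitly ---- *)

Record SpanObj := BuildSpanObj {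
  spA : Ob; spB : Ob; spC : Ob;
  spf : H spA spB; spg : V spA spC }.
Record SpanHom (X Y : SpanObj) := BuildSpanHom {
  spta : V (spA X) (spA Y); sptb : V (spB X) (spB Y); sptc : V (spC X) (spC Y);
  spt_f : dSq (spf X) spta sptb (spf Y);
  spt_g : compV (spg X) sptc = compV spta (spg Y) }.

Definition span_id (X : SpanObj) : SpanHom X X.
Proof.
refine (@BuildSpanHom X X (idV _) (idV _) (idV _) _ _).
- exact: sq_idV.
- by rewrite compV_id_l compV_id_r.
Defined.

Definition span_comp (X Y Z : SpanObj) (p : SpanHom X Y) (q : SpanHom Y Z) :
  SpanHom X Z.
Proof.
refine (@BuildSpanHom X Z (compV (spta p) (spta q)) (compV (sptb p) (sptb q))
          (compV (sptc p) (sptc q)) _ _).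
- exact: sq_compV (spt_f p) (spt_f q).
- by rewrite -compV_assoc spt_g !compV_assoc spt_g.
Defined.

Record CospanObj := BuildCospanObj {
  coB : Ob; coC : Ob; coD : Ob;
  coh : V coB coD; cok : H coC coD }.
Record CospanHom (X Y : CospanObj) := BuildCospanHom {
  ctb : V (coB X) (coB Y); ctc : V (coC X) (coC Y); ctd : V (coD X) (coD Y);
  ct_k : dSq (cok X) ctc ctd (cok Y);
  ct_h : compV (coh X) ctd = compV ctb (coh Y) }.

Definition cospan_id (X : CospanObj) : CospanHom X X.
Proof.
refine (@BuildCospanHom X X (idV _) (idV _) (idV _) _ _).
- exact: sq_idV.
- by rewrite compV_id_l compV_id_r.
Defined.

Definition cospan_comp (X Y Z : CospanObj) (p : CospanHom X Y) (q : CospanHom Y Z) :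
  CospanHom X Z.
Proof.
refine (@BuildCospanHom X Z (compV (ctb p) (ctb q)) (compV (ctc p) (ctc q))
          (compV (ctd p) (ctd q)) _ _).
- exact: sq_compV (ct_k p) (ct_k q).
- by rewrite -compV_assoc ct_h !compV_assoc ct_h.
Defined.

Record BoxObj := BuildBoxObj {
  qA : Ob; qB : Ob; qC : Ob; qD : Ob;
  qf : H qA qB; qg : V qA qC; qh : V qB qD; qk : H qC qD;
  qsq : dSq qf qg qh qk }.
Record BoxHom (X Y : BoxObj) := BuildBoxHom {
  qta : V (qA X) (qA Y); qtb : V (qB X) (qB Y);
  qtc : V (qC X) (qC Y); qtd : V (qD X) (qD Y);
  qt_f : dSq (qf X) qta qtb (qf Y);
  qt_k : dSq (qk X) qtc qtd (qk Y);
  qt_g : compV (qg X) qtc = compV qta (qg Y);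
  qt_h : compV (qh X) qtd = compV qtb (qh Y) }.

Definition i_obj (X : BoxObj) : SpanObj := BuildSpanObj (qf X) (qg X).
Definition i_hom (X Y : BoxObj) (p : BoxHom X Y) : SpanHom (i_obj X) (i_obj Y) :=
  @BuildSpanHom (i_obj X) (i_obj Y) (qta p) (qtb p) (qtc p) (qt_f p) (qt_g p).
Definition j_obj (X : BoxObj) : CospanObj := BuildCospanObj (qh X) (qk X).
Definition j_hom (X Y : BoxObj) (p : BoxHom X Y) : CospanHom (j_obj X) (j_obj Y) :=
  @BuildCospanHom (j_obj X) (j_obj Y) (qtb p) (qtc p) (qtd p) (qt_k p) (qt_h p).

(* (i)+(ii): a section s of i^* (so s(X) agrees with X at a,b,c, and s(p)
   agrees with p at a,b,c: only the d-part is data), and a natural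
   transformation w : s i^* => id whose a,b,c components are identities. *)
Record stable_i_ii := BuildStableIII {
  s_D : SpanObj -> Ob;
  s_h : forall X, V (spB X) (s_D X);
  s_k : forall X, H (spC X) (s_D X);
  s_sq : forall X, dSq (spf X) (spg X) (s_h X) (s_k X);
  s_d : forall X Y, SpanHom X Y -> V (s_D X) (s_D Y);
  s_d_k : forall X Y (p : SpanHom X Y), dSq (s_k X) (sptc p) (s_d p) (s_k Y);
  s_d_h : forall X Y (p : SpanHom X Y),
      compV (s_h X) (s_d p) = compV (sptb p) (s_h Y);
  s_d_id : forall X, s_d (span_id X) = idV (s_D X);
  s_d_comp : forall X Y Z (p : SpanHom X Y) (q : SpanHom Y Z),
      s_d (span_comp p q) = compV (s_d p) (s_d q);
  (* w_X : s(i^* X) -> X, components (id, id, id, w_d X) *)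
  w_d : forall X : BoxObj, V (s_D (i_obj X)) (qD X);
  w_f : forall X : BoxObj, dSq (qf X) (idV (qA X)) (idV (qB X)) (qf X);
  w_k : forall X : BoxObj, dSq (s_k (i_obj X)) (idV (qC X)) (w_d X) (qk X);
  w_g : forall X : BoxObj, compV (qg X) (idV (qC X)) = compV (idV (qA X)) (qg X);
  w_h : forall X : BoxObj, compV (s_h (i_obj X)) (w_d X) = compV (idV (qB X)) (qh X);
  w_nat : forall X Y (p : BoxHom X Y),
      compV (s_d (i_hom p)) (w_d Y) = compV (w_d X) (qtd p) }.

(* (iii)+(iv): a section t of j^* and u : t j^* => id with components the
   identity at b,c,d and a vertical weak equivalence at a. *)
Record stable_iii_iv := BuildStableIIIIV {
  t_A : CospanObj -> Ob;
  t_f : forall Y, H (t_A Y) (coB Y);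
  t_g : forall Y, V (t_A Y) (coC Y);
  t_sq : forall Y, dSq (t_f Y) (t_g Y) (coh Y) (cok Y);
  t_a : forall X Y, CospanHom X Y -> V (t_A X) (t_A Y);
  t_a_f : forall X Y (p : CospanHom X Y), dSq (t_f X) (t_a p) (ctb p) (t_f Y);
  t_a_g : forall X Y (p : CospanHom X Y),
      compV (t_g X) (ctc p) = compV (t_a p) (t_g Y);
  t_a_id : forall X, t_a (cospan_id X) = idV (t_A X);
  t_a_comp : forall X Y Z (p : CospanHom X Y) (q : CospanHom Y Z),
      t_a (cospan_comp p q) = compV (t_a p) (t_a q);
  (* u_X : t(j^* X) -> X, components (u_a X, id, id, id) *)
  u_a : forall X : BoxObj, V (t_A (j_obj X)) (qA X);
  u_a_we : forall X : BoxObj, vwe (u_a X);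
  u_f : forall X : BoxObj, dSq (t_f (j_obj X)) (u_a X) (idV (qB X)) (qf X);
  u_k : forall X : BoxObj, dSq (qk X) (idV (qC X)) (idV (qD X)) (qk X);
  u_g : forall X : BoxObj, compV (t_g (j_obj X)) (idV (qC X)) = compV (u_a X) (qg X);
  u_h : forall X : BoxObj, compV (qh X) (idV (qD X)) = compV (idV (qB X)) (qh X);
  u_nat : forall X Y (p : BoxHom X Y),
      compV (t_a (j_hom p)) (u_a Y) = compV (u_a X) (qta p) }.

Definition stable : Prop := inhabited stable_i_ii /\ inhabited stable_iii_iv.

Definition weq_invertible : Prop :=
  (forall (A B : Ob) (f : V A B), vwe f ->
     exists g : V B A, compV f g = idV A /\ compV g f = idV B) /\
  (forall (A B : Ob) (f : H A B), hwe f ->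
     exists g : H B A, compH f g = idH A /\ compH g f = idH B).

Definition inverse_squares : Prop :=
  forall (A B C' D : Ob) (f : H A B) (k : H C' D)
         (g : V A C') (g' : V C' A) (h : V B D) (h' : V D B),
    compV g g' = idV A -> compV g' g = idV C' ->
    compV h h' = idV B -> compV h' h = idV D ->
    (dSq f g h k <-> dSq k g' h' f).

Definition isostable : Prop := stable /\ weq_invertible /\ inverse_squares.

(* S^square_n C.  Entries A j k for 0 <= j <= k <= n (values of the    *)
(* function outside this range are irrelevant: no morphism data refers *)
(* to them).                                                           *)
Variable n : nat.

Record Sobj := BuildSobj {
  sA : nat -> nat -> Ob;
  sA_diag : forall j, j <= n -> sA j j = O;
  sh : forall j k, j <= k -> k < n -> H (sA j k) (sA j k.+1);
  sv : forall j k, j < k -> k <= n -> V (sA j k) (sA j.+1 k);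
  s_cell : forall j k (hjk : j < k) (hkn : k < n),
      dSq (sh (ltnW hjk) hkn) (sv hjk (ltnW hkn))
          (sv (k := k.+1) (ltnW hjk) hkn) (sh (j := j.+1) hjk hkn) }.

Record Shom (X Y : Sobj) := BuildShom {
  st : forall j k, j <= k -> k <= n -> V (sA X j k) (sA Y j k);
  st_h : forall j k (hjk : j <= k) (hkn : k < n),
      dSq (sh X hjk hkn) (st hjk (ltnW hkn)) (st (k := k.+1) (leqW hjk) hkn)
          (sh Y hjk hkn);
  st_v : forall j k (hjk : j < k) (hkn : k <= n),
      compV (sv X hjk hkn) (st (j := j.+1) hjk hkn)
      = compV (st (ltnW hjk) hkn) (sv Y hjk hkn) }.

Lemma st_pi (X Y : Sobj) (p : Shom X Y) j k (h1 h1' : j <= k) (h2 h2' : k <= n) :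
  st p h1 h2 = st p h1' h2'.
Proof. by rewrite (bool_irrelevance h1 h1') (bool_irrelevance h2 h2'). Qed.

Lemma Shom_ext (X Y : Sobj) (p q : Shom X Y) :
  (forall j k (h1 : j <= k) (h2 : k <= n), st p h1 h2 = st q h1 h2) -> p = q.
Proof.
case: p => p1 p2 p3; case: q => q1 q2 q3 /= E.
have E' : p1 = q1.
  apply: functional_extensionality_dep => j; apply: functional_extensionality_dep => k.
  apply: functional_extensionality_dep => h1; apply: functional_extensionality_dep => h2.
  exact: E.
subst q1; by rewrite (proof_irrelevance _ p2 q2) (proof_irrelevance _ p3 q3).
Qed.

Definition Sid (X : Sobj) : Shom X X.
Proof.
refine (@BuildShom X X (fun j k _ _ => idV _) _ _).
- move=> j k hjk hkn; exact: sq_idV.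
- by move=> j k hjk hkn; rewrite compV_id_l compV_id_r.
Defined.

Definition Scomp (X Y Z : Sobj) (p : Shom X Y) (q : Shom Y Z) : Shom X Z.
Proof.
refine (@BuildShom X Z (fun j k h1 h2 => compV (st p h1 h2) (st q h1 h2)) _ _).
- move=> j k hjk hkn; exact: sq_compV (st_h p hjk hkn) (st_h q hjk hkn).
- move=> j k hjk hkn.
  by rewrite -compV_assoc st_v !compV_assoc st_v.
Defined.

Definition Scat : Cat.
Proof.
refine (@BuildCat Sobj Shom Sid Scomp _ _ _).
- by move=> a b f; apply: Shom_ext => j k h1 h2 /=; rewrite compV_id_l.
- by move=> a b f; apply: Shom_ext => j k h1 h2 /=; rewrite compV_id_r.
- by move=> a b c d f g h; apply: Shom_ext => j k h1 h2 /=; rewrite compV_assoc.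
Defined.

(* V_n C, indexed 0-based: A_0 ->> A_1 ->> ... ->> A_{n-1} (->> O, the *)
(* last map being the unique one to the terminal object O).            *)
Record Vobj := BuildVobj {
  vA : nat -> Ob;
  vp : forall i, i.+1 < n -> V (vA i) (vA i.+1) }.

Record Vhom (X Y : Vobj) := BuildVhom {
  vt : forall i, i < n -> V (vA X i) (vA Y i);
  vt_we : forall i (hi : i < n), vwe (vt hi);
  vt_comm : forall i (hi : i.+1 < n),
      compV (vp X hi) (vt hi) = compV (vt (ltnW hi)) (vp Y hi);
  vt_last : forall i (hi : i < n),
      compV (vt hi) (zV (vA Y i)) = zV (vA X i) }.

Lemma Vhom_ext (X Y : Vobj) (p q : Vhom X Y) :
  (forall i (hi : i < n), vt p hi = vt q hi) -> p = q.
Proof.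
case: p => p1 p2 p3 p4; case: q => q1 q2 q3 q4 /= E.
have E' : p1 = q1.
  apply: functional_extensionality_dep => i; apply: functional_extensionality_dep => hi.
  exact: E.
subst q1; by rewrite (proof_irrelevance _ p2 q2) (proof_irrelevance _ p3 q3)
  (proof_irrelevance _ p4 q4).
Qed.

Lemma vwe_id (A : Ob) : vwe (idV A).
Proof. exact: sq_idV. Qed.

Lemma vwe_comp (A B D : Ob) (f : V A B) (g : V B D) :
  vwe f -> vwe g -> vwe (compV f g).
Proof.
move=> hf hg; have := sq_compV hf hg; by rewrite compV_id_l.
Qed.

Definition Vid (X : Vobj) : Vhom X X.
Proof.
refine (@BuildVhom X X (fun i _ => idV _) _ _ _).
- move=> i hi; exact: vwe_id.
- by move=> i hi; rewrite compV_id_l compV_id_r.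
- by move=> i hi; rewrite compV_id_l.
Defined.

Definition Vcomp (X Y Z : Vobj) (p : Vhom X Y) (q : Vhom Y Z) : Vhom X Z.
Proof.
refine (@BuildVhom X Z (fun i hi => compV (vt p hi) (vt q hi)) _ _ _).
- move=> i hi; exact: vwe_comp (vt_we p hi) (vt_we q hi).
- by move=> i hi; rewrite -compV_assoc vt_comm !compV_assoc vt_comm.
- by move=> i hi; rewrite compV_assoc !vt_last.
Defined.

Definition Vcat : Cat.
Proof.
refine (@BuildCat Vobj Vhom Vid Vcomp _ _ _).
- by move=> a b f; apply: Vhom_ext => i hi /=; rewrite compV_id_l.
- by move=> a b f; apply: Vhom_ext => i hi /=; rewrite compV_id_r.
- by move=> a b c d f g h; apply: Vhom_ext => i hi /=; rewrite compV_assoc.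
Defined.

Definition U_obj (X : Sobj) : Vobj :=
  BuildVobj (fun i (hi : i.+1 < n) => sv X (j := i) (k := n) (ltnW hi) (leqnn n)).

Lemma st_vwe (X Y : Sobj) (p : Shom X Y) j k (h1 : j <= k) (h2 : k <= n) :
  vwe (st p h1 h2).
Proof.
elim: k h1 h2 => [|k IH] h1 h2.
- case: j h1 => [|j] h1 //.
  move: (st p h1 h2) (sA_diag X h2) (sA_diag Y h2).
  move: (sA X 0 0) (sA Y 0 0) => a b f ea eb; subst a b.
  have -> : f = idV O by rewrite (zV_uniq f) (zV_uniq (idV O)).
  exact: vwe_id.
- have [ej|hne] := eqVneq j k.+1; last first.
  + have hjk : j <= k by rewrite -ltnS ltn_neqAle hne h1.
    have hkn : k < n by [].
    have := sq_compH (IH hjk (ltnW hkn)) (st_h p hjk hkn).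
    rewrite (zH_uniq (compH _ _)) (zH_uniq (compH (zH (sA Y j k)) _)).
    by rewrite (st_pi p (leqW hjk) h1 hkn h2).
  + subst j.
    move: (st p h1 h2) (sA_diag X h2) (sA_diag Y h2).
    move: (sA X k.+1 k.+1) (sA Y k.+1 k.+1) => a b f ea eb; subst a b.
    have -> : f = idV O by rewrite (zV_uniq f) (zV_uniq (idV O)).
    exact: vwe_id.
Qed.

Definition U_hom (X Y : Sobj) (p : Shom X Y) : Vhom (U_obj X) (U_obj Y).
Proof.
refine (@BuildVhom (U_obj X) (U_obj Y)
          (fun i (hi : i < n) => st p (ltnW hi) (leqnn n)) _ _ _).
- move=> i hi; exact: st_vwe.
- move=> i hi /=.
  apply: etrans (etrans _ (st_v p (ltnW hi) (leqnn n))) _.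
  + by congr compV; apply: st_pi.
  + by congr compV; apply: st_pi.
- move=> i hi; by rewrite (zV_uniq (compV _ _)).
Defined.

Definition U_functor : Functor Scat Vcat.
Proof.
refine (@BuildFunctor Scat Vcat U_obj U_hom _ _).
- by move=> a; apply: Vhom_ext.
- by move=> a b c f g; apply: Vhom_ext.
Defined.

End SquaresCategories.

(* Main.v *)
Require Import Defs.
From Stdlib Require Import ProofIrrelevance FunctionalExtensionality ClassicalEpsilon.
From mathcomp Require Import all_boot.
Set Implicit Arguments. Unset Strict Implicit. Unset Printing Implicit Defensive.

Section Generic.
Variables (Cc Dc : Cat) (F : Functor Cc Dc).

Definition fully_faithful := forall a b (g : hom (F a) (F b)),
  exists f : hom a b, fhom F f = g /\ forall f' : hom a b, fhom F f' = g -> f' = f.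
Definition ess_surj := forall d : ob Dc, exists c : ob Cc,
  exists (i : hom (F c) d) (i' : hom d (F c)), ccomp i i' = cid _ /\ ccomp i' i = cid _.

Hypothesis ff : fully_faithful.
Hypothesis es : ess_surj.

Definition Gob (d : ob Dc) : ob Cc := proj1_sig (constructive_indefinite_description _ (es d)).
Lemma Giso_ex d : exists (i : hom (F (Gob d)) d) (i' : hom d (F (Gob d))),
   ccomp i i' = cid _ /\ ccomp i' i = cid _.
Proof. exact: (proj2_sig (constructive_indefinite_description _ (es d))). Qed.
Definition Gi d : hom (F (Gob d)) d := proj1_sig (constructive_indefinite_description _ (Giso_ex d)).
Lemma Gi'_ex d : exists (i' : hom d (F (Gob d))), ccomp (Gi d) i' = cid _ /\ ccomp i' (Gi d) = cid _.
Proof. exact: (proj2_sig (constructive_indefinite_description _ (Giso_ex d))). Qed.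
Definition Gi' d : hom d (F (Gob d)) := proj1_sig (constructive_indefinite_description _ (Gi'_ex d)).
Lemma Gi_i' d : ccomp (Gi d) (Gi' d) = cid _.
Proof. exact: (proj1 (proj2_sig (constructive_indefinite_description _ (Gi'_ex d)))). Qed.
Lemma Gi'_i d : ccomp (Gi' d) (Gi d) = cid _.
Proof. exact: (proj2 (proj2_sig (constructive_indefinite_description _ (Gi'_ex d)))). Qed.

Definition pre a b (g : hom (F a) (F b)) : hom a b :=
  proj1_sig (constructive_indefinite_description _ (ff g)).
Lemma pre_spec a b (g : hom (F a) (F b)) : fhom F (pre g) = g.
Proof. exact: (proj1 (proj2_sig (constructive_indefinite_description _ (ff g)))). Qed.
Lemma faithful a b (f f' : hom a b) : fhom F f = fhom F f' -> f = f'.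
Proof.
move=> E; have [f0 [_ U]] := ff (fhom F f).
by rewrite (U f erefl) (U f' (esym E)).
Qed.

Definition Gfun : Functor Dc Cc.
Proof.
refine (@BuildFunctor Dc Cc Gob (fun d d' g => pre (ccomp (Gi d) (ccomp g (Gi' d')))) _ _).
- move=> d; apply: faithful; rewrite pre_spec fhom_id ccomp_id_l; exact: Gi_i'.
- move=> a b c f g; apply: faithful; rewrite fhom_comp !pre_spec.
  rewrite !ccomp_assoc; congr ccomp; congr ccomp.
  rewrite -!ccomp_assoc Gi'_i ccomp_id_l; done.
Defined.

Lemma ff_es_equiv : is_equivalence F.
Proof.
exists Gfun; split; constructor.
- refine (@BuildNatIso _ _ (IdF Cc) (CompF F Gfun)
    (fun c => pre (Gi' (F c))) (fun c => pre (Gi (F c))) _ _ _).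
  + move=> c; apply: faithful; rewrite fhom_comp !pre_spec fhom_id /=; exact: Gi'_i.
  + move=> c; apply: faithful; rewrite fhom_comp !pre_spec fhom_id /=; exact: Gi_i'.
  + move=> a b f; apply: faithful; rewrite /= !fhom_comp !pre_spec.
    by rewrite -!ccomp_assoc Gi'_i ccomp_id_l.
- refine (@BuildNatIso _ _ (CompF Gfun F) (IdF Dc)
    (fun d => Gi d) (fun d => Gi' d) _ _ _).
  + move=> d; exact: Gi_i'.
  + move=> d; exact: Gi'_i.
  + move=> a b f /=; rewrite pre_spec -!ccomp_assoc.
    by rewrite ccomp_assoc Gi'_i ccomp_id_r.
Qed.
End Generic.

Section Core.
Variable C : SquaresCat.
Variable ST : stable_iii_iv C.
Hypothesis Hinv : weq_invertible C.
Hypothesis Hisq : inverse_squares C.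
Local Notation Ob := (dob C).
Local Notation O := (sO C).

Lemma zH_eq (A : Ob) (f g : dH O A) : f = g.
Proof. by rewrite (zH_uniq f) (zH_uniq g). Qed.
Lemma zV_eq (A : Ob) (f g : dV A O) : f = g.
Proof. by rewrite (zV_uniq f) (zV_uniq g). Qed.

Definition vinv (A B : Ob) (f : dV A B) (hf : vwe f) : dV B A :=
  proj1_sig (constructive_indefinite_description _ (proj1 Hinv A B f hf)).
Lemma vinv_spec (A B : Ob) (f : dV A B) (hf : vwe f) :
  compV f (vinv hf) = idV A /\ compV (vinv hf) f = idV B.
Proof. exact: (proj2_sig (constructive_indefinite_description _ (proj1 Hinv A B f hf))). Qed.
Lemma vinv_l (A B : Ob) (f : dV A B) (hf : vwe f) : compV f (vinv hf) = idV A.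
Proof. exact: (proj1 (vinv_spec hf)). Qed.
Lemma vinv_r (A B : Ob) (f : dV A B) (hf : vwe f) : compV (vinv hf) f = idV B.
Proof. exact: (proj2 (vinv_spec hf)). Qed.

Lemma vwe_inv_gen (A B : Ob) (f : dV A B) (g : dV B A) :
  compV f g = idV A -> compV g f = idV B -> vwe f -> vwe g.
Proof.
move=> e1 e2 hf.
have := (@Hisq O A O B (zH A) (zH B) (idV O) (idV O) f g
           (compV_id_l _) (compV_id_l _) e1 e2).
by move=> [H _]; apply: H.
Qed.

Lemma vwe_vinv (A B : Ob) (f : dV A B) (hf : vwe f) : vwe (vinv hf).
Proof. exact: vwe_inv_gen (vinv_l hf) (vinv_r hf) hf. Qed.

Lemma vwe_idV (A : Ob) : vwe (idV A).
Proof. exact: vwe_id. Qed.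

Lemma vwe_comp' (A B D : Ob) (f : dV A B) (g : dV B D) : vwe f -> vwe g -> vwe (compV f g).
Proof. exact: vwe_comp. Qed.

Lemma vwe_cancel_l (A B D : Ob) (f : dV A B) (g : dV B D) :
  vwe f -> vwe (compV f g) -> vwe g.
Proof.
move=> hf hfg.
have -> : g = compV (vinv hf) (compV f g) by rewrite -compV_assoc vinv_r compV_id_l.
exact: vwe_comp (vwe_vinv hf) hfg.
Qed.

Lemma vwe_cancel_r (A B D : Ob) (f : dV A B) (g : dV B D) :
  vwe g -> vwe (compV f g) -> vwe f.
Proof.
move=> hg hfg.
have -> : f = compV (compV f g) (vinv hg) by rewrite compV_assoc vinv_l compV_id_r.
exact: vwe_comp hfg (vwe_vinv hg).
Qed.

Lemma L1 (A B A' B' : Ob) (f : dH A B) (x : dV A A') (b : dV B B') (f' : dH A' B') :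
  dSq f x b f' -> vwe b -> vwe x.
Proof.
move=> Sq hb.
pose Nx := @BuildCospanObj C A O A' x (zH A').
have S1 : dSq (t_f ST Nx) (t_g ST Nx) x (zH A') := t_sq ST Nx.
have S2 := sq_compH S1 Sq.
rewrite (zH_eq (compH (zH A') f') (zH B')) in S2.
pose W := BuildBoxObj S2.
pose Vb := BuildBoxObj hb.
have e1 := u_g ST Vb. have e2 := u_g ST W.
rewrite /= !compV_id_r in e1 e2.
have hg : vwe (t_g ST Nx).
  apply: (vwe_cancel_l (u_a_we ST W)).
  rewrite -e2 e1; exact (u_a_we ST Vb).
have := sq_compH hg S1.
by rewrite (zH_eq (compH (zH _) _) (zH A)) (zH_eq (compH (zH O) _) (zH A')).
Qed.


Lemma CospanHom_ext (X Y : CospanObj C) (p q : CospanHom X Y) :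
  ctb p = ctb q -> ctc p = ctc q -> ctd p = ctd q -> p = q.
Proof.
case: p => b c d k h; case: q => b' c' d' k' h' /= eb ec ed.
subst b' c' d'. by rewrite (proof_irrelevance _ k k') (proof_irrelevance _ h h').
Qed.

Lemma fill_unique (X Y : BoxObj C) (a a' : dV (qA X) (qA Y)) (b : dV (qB X) (qB Y))
  (c : dV (qC X) (qC Y)) (d : dV (qD X) (qD Y)) :
  dSq (qf X) a b (qf Y) -> dSq (qf X) a' b (qf Y) -> dSq (qk X) c d (qk Y) ->
  compV (qg X) c = compV a (qg Y) -> compV (qg X) c = compV a' (qg Y) ->
  compV (qh X) d = compV b (qh Y) -> a = a'.
Proof.
move=> hf hf' hk hg hg' hh.
pose p := BuildBoxHom hf hk hg hh.
pose p' := BuildBoxHom hf' hk hg' hh.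
have e := u_nat ST p. have e' := u_nat ST p'.
have ej : j_hom p = j_hom p' by apply: CospanHom_ext.
rewrite ej e' in e.
have := f_equal (fun z => compV (vinv (u_a_we ST X)) z) e.
by rewrite -!compV_assoc vinv_r !compV_id_l /= => ->.
Qed.

Definition fill (X Y : BoxObj C) (q : CospanHom (j_obj X) (j_obj Y)) : dV (qA X) (qA Y) :=
  compV (vinv (u_a_we ST X)) (compV (t_a ST q) (u_a ST Y)).

Lemma fill_f (X Y : BoxObj C) (q : CospanHom (j_obj X) (j_obj Y)) :
  dSq (qf X) (fill q) (ctb q) (qf Y).
Proof.
have h1 : dSq (qf X) (vinv (u_a_we ST X)) (idV _) (t_f ST (j_obj X)).
  have := @Hisq _ _ _ _ (t_f ST (j_obj X)) (qf X) (u_a ST X) (vinv (u_a_we ST X))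
     (idV _) (idV _) (vinv_l _) (vinv_r _) (compV_id_l _) (compV_id_l _).
  by move=> [H _]; apply: H; exact: u_f.
have := sq_compV (sq_compV h1 (t_a_f ST q)) (u_f ST Y).
by rewrite /fill !compV_assoc !compV_id_l compV_id_r.
Qed.

Lemma fill_g (X Y : BoxObj C) (q : CospanHom (j_obj X) (j_obj Y)) :
  compV (qg X) (ctc q) = compV (fill q) (qg Y).
Proof.
have eX := u_g ST X. have eY := u_g ST Y.
rewrite compV_id_r in eX; rewrite compV_id_r in eY.
rewrite /fill !compV_assoc -eY -t_a_g eX -!compV_assoc vinv_r compV_id_l //.
Qed.


Section NFixed.
Variable n : nat.

Lemma sv_pi (Z : Sobj C n) j k (h1 h1' : j < k) (h2 h2' : k <= n) :
  sv Z h1 h2 = sv Z h1' h2'.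
Proof. by rewrite (bool_irrelevance h1 h1') (bool_irrelevance h2 h2'). Qed.
Lemma sh_pi (Z : Sobj C n) j k (h1 h1' : j <= k) (h2 h2' : k < n) :
  sh Z h1 h2 = sh Z h1' h2'.
Proof. by rewrite (bool_irrelevance h1 h1') (bool_irrelevance h2 h2'). Qed.

Lemma V_to_O (a b : Ob) (e : b = O) (f g : dV a b) : f = g.
Proof. by move: f g; rewrite e => f g; exact: zV_eq. Qed.

Lemma sq_diag (a a' b b' : Ob) (ea : a = O) (ea' : a' = O) (f : dH a b) (f' : dH a' b')
  (x : dV a a') (y : dV b b') : vwe y -> dSq f x y f'.
Proof.
move: f f' x; rewrite ea ea' => f f' x.
by rewrite (zH_eq f (zH b)) (zH_eq f' (zH b')) (zV_eq x (idV O)).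
Qed.

Lemma vwe_diag (a b : Ob) (ea : a = O) (eb : b = O) (x : dV a b) : vwe x.
Proof. move: x; rewrite ea eb => x; rewrite (zV_eq x (idV O)); exact: vwe_idV. Qed.

Lemma diagE (Z : Sobj C n) j k : j = k -> k <= n -> sA Z j k = O.
Proof. by move=> -> hk; exact: sA_diag. Qed.

Lemma le_ge_eq j m : j <= m -> m <= j -> j = m.
Proof. by move=> h1 h2; apply: anti_leq; rewrite h1 h2. Qed.

Section LiftXY.
Variables (X Y : Sobj C n) (phi : Vhom (U_obj X) (U_obj Y)).

Definition dmap j k (e : sA Y j k = O) : dV (sA X j k) (sA Y j k) :=
  eq_rect_r (fun o => dV (sA X j k) o) (zV (sA X j k)) e.

Record Col (k : nat) := BuildCol {
  cc : forall j, j <= k -> dV (sA X j k) (sA Y j k);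
  cc_v : forall j (h1 : j < k) (h2 : k <= n) (h3 : j.+1 <= k) (h4 : j <= k),
     compV (sv X h1 h2) (cc h3) = compV (cc h4) (sv Y h1 h2);
  cc_w : forall j (h : j <= k), vwe (cc h) }.

Lemma cc_pi k (c : Col k) j (h h' : j <= k) : cc c h = cc c h'.
Proof. by rewrite (bool_irrelevance h h'). Qed.

Definition cn j (h : j <= n) : dV (sA X j n) (sA Y j n) :=
  match ltnP j n with
  | LtnNotGeq hlt => vt phi hlt
  | GeqNotLtn hge => dmap (diagE Y (le_ge_eq h hge) (leqnn n))
  end.

Lemma cn_lt j (h : j <= n) (hlt : j < n) : cn h = vt phi hlt.
Proof.
rewrite /cn; case: (ltnP j n) => [h'|h']; first by rewrite (bool_irrelevance h' hlt).
by exfalso; move: h'; rewrite leqNgt hlt.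
Qed.

Lemma cn_v j (h1 : j < n) (h2 : n <= n) (h3 : j.+1 <= n) (h4 : j <= n) :
  compV (sv X h1 h2) (cn h3) = compV (cn h4) (sv Y h1 h2).
Proof.
case: (ltnP j.+1 n) => hj.
- rewrite (cn_lt h3 hj) (cn_lt h4 (ltnW hj)).
  have := vt_comm phi hj; rewrite /= => E.
  by rewrite (sv_pi X h1 (ltnW hj) h2 (leqnn n)) (sv_pi Y h1 (ltnW hj) h2 (leqnn n)) E.
- apply: V_to_O; apply: diagE (leqnn n); exact: le_ge_eq h3 hj.
Qed.

Lemma cn_w j (h : j <= n) : vwe (cn h).
Proof.
case: (ltnP j n) => hj; first by rewrite (cn_lt h hj); exact (vt_we phi hj).
have e := le_ge_eq h hj.
apply: vwe_diag; apply: diagE (leqnn n) => //.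
Qed.

Definition coln : Col n := BuildCol cn_v cn_w.

Section NextCol.
Variables (k : nat) (hkn : k < n) (c : Col k.+1).

Definition cellX j (hjk : j < k) : BoxObj C := BuildBoxObj (s_cell X hjk hkn).
Definition cellY j (hjk : j < k) : BoxObj C := BuildBoxObj (s_cell Y hjk hkn).

Definition Prow j (x : dV (sA X j k) (sA Y j k)) : Prop :=
  forall (h1 : j <= k) (h4 : j <= k.+1), dSq (sh X h1 hkn) x (cc c h4) (sh Y h1 hkn).

Lemma row0_proof j (e : j = k) :
  Prow (dmap (diagE Y e (ltnW hkn))).
Proof.
move=> h1 h4; apply: sq_diag (cc_w c h4).
- exact: diagE e (ltnW hkn).
- exact: diagE e (ltnW hkn).
Qed.

Definition row0 j (e : j = k) : {x | Prow x} := exist _ _ (row0_proof e).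

Definition qmk j (hjk : j < k) (r : {x : dV (sA X j.+1 k) (sA Y j.+1 k) | Prow x}) :
  CospanHom (j_obj (cellX hjk)) (j_obj (cellY hjk)) :=
  @BuildCospanHom C (j_obj (cellX hjk)) (j_obj (cellY hjk))
    (cc c (leqW (ltnW hjk))) (proj1_sig r) (cc c (leqW hjk))
    (proj2_sig r hjk (leqW hjk))
    (cc_v c (ltnW hjk) hkn (leqW hjk) (leqW (ltnW hjk))).

Lemma rowS_proof j (hjk : j < k) (r : {x : dV (sA X j.+1 k) (sA Y j.+1 k) | Prow x}) :
  Prow (fill (qmk hjk r)).
Proof.
move=> h1 h4; have := fill_f (qmk hjk r).
by rewrite /= (sh_pi X h1 (ltnW hjk) hkn hkn) (sh_pi Y h1 (ltnW hjk) hkn hkn)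
  (cc_pi c h4 (leqW (ltnW hjk))).
Qed.

Definition rowS j (hjk : j < k) (r : {x : dV (sA X j.+1 k) (sA Y j.+1 k) | Prow x}) :
  {x | Prow x} := exist _ _ (rowS_proof hjk r).

Lemma ltn_of g j : g.+1 + j = k -> j < k.
Proof. by move=> <-; rewrite addSn ltnS leq_addl. Qed.
Lemma eS_of g j : g.+1 + j = k -> g + j.+1 = k.
Proof. by rewrite addSnnS. Qed.
Lemma e0_of j : 0 + j = k -> j = k.
Proof. by []. Qed.

Fixpoint rows (g : nat) : forall j, g + j = k -> {x : dV (sA X j k) (sA Y j k) | Prow x} :=
  match g with
  | 0 => fun j e => row0 (e0_of e)
  | g'.+1 => fun j e => rowS (ltn_of e) (@rows g' j.+1 (eS_of e))
  end.

Lemma rows_pi g g' j (e : g + j = k) (e' : g' + j = k) : g = g' -> rows e = rows e'.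
Proof. move=> E; subst g'; by rewrite (proof_irrelevance _ e e'). Qed.

Definition ncc j (h : j <= k) : dV (sA X j k) (sA Y j k) := proj1_sig (rows (subnK h)).

Lemma subSS' j : j < k -> k - j = (k - j.+1).+1.
Proof. by move=> h; rewrite subnS prednK // subn_gt0. Qed.

Lemma ncc_S j (hjk : j < k) (h : j <= k) :
  ncc h = fill (qmk hjk (rows (subnK hjk))).
Proof.
have e' : (k - j.+1).+1 + j = k := eq_trans (addSnnS _ _) (subnK hjk).
rewrite /ncc (rows_pi (subnK h) e' (subSS' hjk)) /=.
by rewrite (bool_irrelevance (ltn_of e') hjk) (rows_pi (eS_of e') (subnK hjk) erefl).
Qed.

Lemma ncc_v j (h1 : j < k) (h2 : k <= n) (h3 : j.+1 <= k) (h4 : j <= k) :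
  compV (sv X h1 h2) (ncc h3) = compV (ncc h4) (sv Y h1 h2).
Proof.
rewrite (ncc_S h1 h4) (sv_pi Y h1 h1 h2 (ltnW hkn)).
have := fill_g (qmk h1 (rows (subnK h1))); rewrite /= => <-.
by rewrite (sv_pi X h1 h1 h2 (ltnW hkn)) /ncc (rows_pi (subnK h3) (subnK h1) erefl).
Qed.

Lemma ncc_sq j (h1 : j <= k) (h3 : j <= k) (h4 : j <= k.+1) :
  dSq (sh X h1 hkn) (ncc h3) (cc c h4) (sh Y h1 hkn).
Proof. exact: (proj2_sig (rows (subnK h3))). Qed.

Lemma ncc_w j (h : j <= k) : vwe (ncc h).
Proof. exact: L1 (ncc_sq h h (leqW h)) (cc_w c _). Qed.

Definition nextcol : Col k := BuildCol ncc_v ncc_w.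
End NextCol.

Lemma hkn_of f k : f.+1 + k = n -> k < n.
Proof. by move=> <-; rewrite addSnnS leq_addl. Qed.
Lemma eS'_of f k : f.+1 + k = n -> f + k.+1 = n.
Proof. by rewrite addSnnS. Qed.

Fixpoint cols (f : nat) : forall k, f + k = n -> Col k :=
  match f with
  | 0 => fun k e => eq_rect n Col coln k (esym e)
  | f'.+1 => fun k e => nextcol (hkn_of e) (@cols f' k.+1 (eS'_of e))
  end.

Lemma cols_pi f f' k (e : f + k = n) (e' : f' + k = n) : f = f' -> cols e = cols e'.
Proof. move=> E; subst f'; by rewrite (proof_irrelevance _ e e'). Qed.

Lemma cols_S k (hkn : k < n) (e : n - k + k = n) :
  cols e = nextcol hkn (cols (subnK hkn)).
Proof.
have e' : (n - k.+1).+1 + k = n := eq_trans (addSnnS _ _) (subnK hkn).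
rewrite (cols_pi e e' (subSS' hkn)) /=.
by rewrite (bool_irrelevance (hkn_of e') hkn) (cols_pi (eS'_of e') (subnK hkn) erefl).
Qed.

Lemma cols_n (e : n - n + n = n) : cols e = coln.
Proof.
rewrite (cols_pi e (erefl : 0 + n = n)); last by rewrite subnn.
by [].
Qed.

Definition stc j k (h1 : j <= k) (h2 : k <= n) : dV (sA X j k) (sA Y j k) :=
  cc (cols (subnK h2)) h1.

Lemma stc_h j k (hjk : j <= k) (hkn : k < n) :
  dSq (sh X hjk hkn) (stc hjk (ltnW hkn)) (stc (leqW hjk) hkn) (sh Y hjk hkn).
Proof. rewrite /stc (cols_S hkn) /=; exact: ncc_sq. Qed.

Lemma stc_v j k (hjk : j < k) (hkn : k <= n) :
  compV (sv X hjk hkn) (stc hjk hkn) = compV (stc (ltnW hjk) hkn) (sv Y hjk hkn).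
Proof. exact: cc_v. Qed.

Definition liftS : Shom X Y := BuildShom stc_h stc_v.

Lemma liftS_U : U_hom liftS = phi.
Proof.
apply: Vhom_ext => i hi /=.
by rewrite /stc (cols_n (subnK (leqnn n))) /= (cn_lt _ hi).
Qed.

Lemma stv_any (Z Z' : Sobj C n) (p : Shom Z Z') j k (h1 : j < k) (h2 : k <= n)
  (a1 : j.+1 <= k) (a2 : j <= k) (b1 : j < k) (b2 : k <= n) (c1 c2 : k <= n) :
  compV (sv Z h1 h2) (st p a1 c1) = compV (st p a2 c2) (sv Z' b1 b2).
Proof.
rewrite (bool_irrelevance a1 h1) (bool_irrelevance a2 (ltnW h1)) (bool_irrelevance b1 h1).
rewrite (bool_irrelevance b2 h2) (bool_irrelevance c1 h2) (bool_irrelevance c2 h2).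
exact: st_v.
Qed.

Lemma sth_any (Z Z' : Sobj C n) (p : Shom Z Z') j k (h1 : j <= k) (h2 : k < n)
  (a1 : j <= k) (a2 : k <= n) (b1 : j <= k.+1) (b2 : k.+1 <= n) (c1 : j <= k) (c2 : k < n) :
  dSq (sh Z h1 h2) (st p a1 a2) (st p b1 b2) (sh Z' c1 c2).
Proof.
rewrite (bool_irrelevance a1 h1) (bool_irrelevance a2 (ltnW h2)) (bool_irrelevance b1 (leqW h1)).
rewrite (bool_irrelevance b2 h2) (bool_irrelevance c1 h1) (bool_irrelevance c2 h2).
exact: st_h.
Qed.

Lemma colk_all (p q : Shom X Y) k :
  (forall j (h1 : j <= k) (h2 : k <= n), st p h1 h2 = st q h1 h2) ->
  forall g j, g + j = k -> forall (h1 : j <= k) (h2 : k <= n), st p h1 h2 = st q h1 h2.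
Proof. by move=> H g j _ h1 h2; exact: H. Qed.

Lemma lift_unique (p q : Shom X Y) :
  (forall i (hi : i < n), st p (ltnW hi) (leqnn n) = st q (ltnW hi) (leqnn n)) -> p = q.
Proof.
move=> H; apply: Shom_ext.
suff S : forall f k, f + k = n -> forall g j, g + j = k ->
    forall (h1 : j <= k) (h2 : k <= n), st p h1 h2 = st q h1 h2.
  move=> j k h1 h2; exact: (S (n - k) k (subnK h2) (k - j) j (subnK h1)).
elim=> [|f IHf] k ek.
- rewrite add0n in ek; subst k => g j _ h1 h2.
  case: (ltnP j n) => hj.
  + by rewrite (st_pi p h1 (ltnW hj) h2 (leqnn n)) (st_pi q h1 (ltnW hj) h2 (leqnn n)) H.
  + apply: V_to_O; exact: diagE (le_ge_eq h1 hj) (leqnn n).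
- have hkn : k < n := hkn_of ek.
  have IHk := IHf k.+1 (eS'_of ek).
  elim=> [|g IHg] j ej h1 h2.
  + apply: V_to_O; exact: diagE (e0_of ej) h2.
  + have hjk : j < k := ltn_of ej.
    have eb : st p (leqW (ltnW hjk)) hkn = st q (leqW (ltnW hjk)) hkn
      := IHk _ _ (subnK (leqW (ltnW hjk))) _ _.
    have ec : st p (j:=j.+1) hjk h2 = st q hjk h2 := IHg _ (eS_of ej) _ _.
    pose cX := cellX hkn hjk; pose cY := cellY hkn hjk.
    have hf : dSq (qf cX) (st p (ltnW hjk) (ltnW hkn)) (st p (leqW (ltnW hjk)) hkn) (qf cY)
      by apply: sth_any.
    have hf' : dSq (qf cX) (st q (ltnW hjk) (ltnW hkn)) (st p (leqW (ltnW hjk)) hkn) (qf cY)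
      by rewrite eb; apply: sth_any.
    have hk : dSq (qk cX) (st p hjk (ltnW hkn)) (st p (leqW hjk) hkn) (qk cY)
      by apply: sth_any.
    have hg : compV (qg cX) (st p hjk (ltnW hkn)) = compV (st p (ltnW hjk) (ltnW hkn)) (qg cY)
      by apply: stv_any.
    have hg' : compV (qg cX) (st p hjk (ltnW hkn)) = compV (st q (ltnW hjk) (ltnW hkn)) (qg cY)
      by rewrite (st_pi p hjk hjk (ltnW hkn) h2) ec; apply: stv_any.
    have hh : compV (qh cX) (st p (leqW hjk) hkn) = compV (st p (leqW (ltnW hjk)) hkn) (qh cY)
      by apply: stv_any.
    rewrite (st_pi p h1 (ltnW hjk) h2 (ltnW hkn)) (st_pi q h1 (ltnW hjk) h2 (ltnW hkn)).
    exact: (@fill_unique cX cY _ _ _ _ _ hf hf' hk hg hg' hh).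
Qed.

End LiftXY.

Definition castVr (a b b' : Ob) (e : b = b') (f : dV a b) : dV a b' := eq_rect b (dV a) f b' e.
Definition castVl (a a' b : Ob) (e : a = a') (f : dV a b) : dV a' b :=
  eq_rect a (fun x => dV x b) f a' e.
Definition castHl (a a' b : Ob) (e : a = a') (f : dH a b) : dH a' b :=
  eq_rect a (fun x => dH x b) f a' e.
Definition isoV (a b : Ob) (e : a = b) : dV a b := castVr e (idV a).

Lemma vwe_isoV (a b : Ob) (e : a = b) : vwe (isoV e).
Proof. destruct e; exact: vwe_idV. Qed.
Lemma isoV_inv (a b : Ob) (e : a = b) : compV (isoV e) (isoV (esym e)) = idV a.
Proof. destruct e; exact: compV_id_l. Qed.
Lemma isoV_inv' (a b : Ob) (e : a = b) : compV (isoV (esym e)) (isoV e) = idV b.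
Proof. destruct e; exact: compV_id_l. Qed.

Lemma cast_nat (a x b y : Ob) (X1 E1 : a = x) (X2 E2 : b = y) (v : dV x y) :
  compV (castVl (esym X1) (castVr (esym X2) v)) (isoV E2) = compV (isoV E1) v.
Proof.
destruct X1, X2; rewrite (proof_irrelevance _ E1 erefl) (proof_irrelevance _ E2 erefl).
by rewrite /isoV /= compV_id_l compV_id_r.
Qed.
Lemma cast_nat' (a x b y : Ob) (X1 E1 : a = x) (X2 E2 : b = y) (v : dV x y) :
  compV v (isoV (esym E2)) = compV (isoV (esym E1)) (castVl (esym X1) (castVr (esym X2) v)).
Proof.
destruct X1, X2; rewrite (proof_irrelevance _ E1 erefl) (proof_irrelevance _ E2 erefl).
by rewrite /isoV /= compV_id_l compV_id_r.
Qed.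

Record ColO := BuildColO { oE : nat -> Ob; ov : forall j, dV (oE j) (oE j.+1) }.

Section EsoY.
Variable Yv : Vobj C n.

Definition En j : Ob := if j < n then vA Yv j else O.
Lemma En_lt j : j < n -> En j = vA Yv j.
Proof. by rewrite /En => ->. Qed.
Lemma En_ge j : n <= j -> En j = O.
Proof. by rewrite /En ltnNge => ->. Qed.

Definition ov_n j : dV (En j) (En j.+1) :=
  match ltnP j.+1 n with
  | LtnNotGeq h => castVl (esym (En_lt (ltnW h))) (castVr (esym (En_lt h)) (vp Yv h))
  | GeqNotLtn h => castVr (esym (En_ge h)) (zV (En j))
  end.

Definition colO_n : ColO := BuildColO ov_n.

Definition cosp (c : ColO) j (r : {A : Ob & dH A (oE c j.+1)}) : CospanObj C :=
  @BuildCospanObj C (oE c j) (projT1 r) (oE c j.+1) (ov c j) (projT2 r).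

Fixpoint rowsO (c : ColO) (g : nat) (j : nat) : {A : Ob & dH A (oE c j)} :=
  match g with
  | 0 => existT _ O (zH (oE c j))
  | g'.+1 => existT _ (t_A ST (cosp (rowsO c g' j.+1))) (t_f ST (cosp (rowsO c g' j.+1)))
  end.

Definition vmapO (c : ColO) (g j : nat) :
  dV (projT1 (rowsO c g j)) (projT1 (rowsO c g.-1 j.+1)) :=
  match g as g0 return dV (projT1 (rowsO c g0 j)) (projT1 (rowsO c g0.-1 j.+1)) with
  | 0 => idV O
  | g'.+1 => t_g ST (cosp (rowsO c g' j.+1))
  end.

Definition EjO (c : ColO) kk j :
  projT1 (rowsO c (kk - j).-1 j.+1) = projT1 (rowsO c (kk - j.+1) j.+1) :=
  f_equal (fun g => projT1 (rowsO c g j.+1)) (esym (subnS kk j)).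

Definition nextO (kk : nat) (c : ColO) : ColO :=
  @BuildColO (fun j => projT1 (rowsO c (kk - j) j))
             (fun j => castVr (EjO c kk j) (vmapO c (kk - j) j)).

Definition ohO kk (c : ColO) j : dH (oE (nextO kk c) j) (oE c j) :=
  projT2 (rowsO c (kk - j) j).

Lemma cellO_gen (c : ColO) j G g (eG : G = g.+1)
  (E : projT1 (rowsO c G.-1 j.+1) = projT1 (rowsO c g j.+1)) :
  dSq (projT2 (rowsO c G j)) (castVr E (vmapO c G j)) (ov c j) (projT2 (rowsO c g j.+1)).
Proof.
subst G; rewrite (proof_irrelevance _ E erefl) /=.
exact: t_sq.
Qed.

Lemma cellO kk (c : ColO) j : j < kk ->
  dSq (ohO kk c j) (ov (nextO kk c) j) (ov c j) (ohO kk c j.+1).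
Proof. move=> h; exact: cellO_gen (subSS' h) _. Qed.

Fixpoint colsO (f : nat) : ColO :=
  match f with 0 => colO_n | f'.+1 => nextO (n - f'.+1) (colsO f') end.

Lemma oE_ge f j : n - f <= j -> oE (colsO f) j = O.
Proof.
case: f => [|f] h /=.
- by apply: En_ge; rewrite subn0 in h.
- have -> : n - f.+1 - j = 0 by apply/eqP; rewrite subn_eq0.
  by [].
Qed.

Definition GsA j k : Ob := oE (colsO (n - k)) j.

Lemma GsA_diag j : j <= n -> GsA j j = O.
Proof. by move=> h; apply: oE_ge; rewrite subKn. Qed.

Definition Eh k (h2 : k < n) j : oE (colsO (n - k.+1).+1) j = oE (colsO (n - k)) j :=
  f_equal (fun f => oE (colsO f) j) (esym (subSS' h2)).

Definition Gsh j k (h1 : j <= k) (h2 : k < n) : dH (GsA j k) (GsA j k.+1) :=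
  castHl (Eh h2 j) (ohO (n - (n - k.+1).+1) (colsO (n - k.+1)) j).

Definition Gsv j k (h1 : j < k) (h2 : k <= n) : dV (GsA j k) (GsA j.+1 k) :=
  ov (colsO (n - k)) j.

Lemma cell_gen F f j (eF : F = f.+1) (E1 : oE (colsO f.+1) j = oE (colsO F) j)
  (E2 : oE (colsO f.+1) j.+1 = oE (colsO F) j.+1) : j < n - f.+1 ->
  dSq (castHl E1 (ohO (n - f.+1) (colsO f) j)) (ov (colsO F) j) (ov (colsO f) j)
      (castHl E2 (ohO (n - f.+1) (colsO f) j.+1)).
Proof.
subst F; rewrite (proof_irrelevance _ E1 erefl) (proof_irrelevance _ E2 erefl) /=.
exact: cellO.
Qed.

Lemma Gs_cell j k (hjk : j < k) (hkn : k < n) :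
  dSq (Gsh (ltnW hjk) hkn) (Gsv hjk (ltnW hkn)) (Gsv (k := k.+1) (ltnW hjk) hkn)
      (Gsh (j := j.+1) hjk hkn).
Proof.
rewrite /Gsh /Gsv; apply: cell_gen; first exact: subSS'.
by rewrite -subSS' // subKn // ltnW.
Qed.

Definition GY : Sobj C n := @BuildSobj C n GsA GsA_diag Gsh Gsv Gs_cell.

Lemma EU i (hi : i < n) : sA GY i n = vA Yv i.
Proof. by rewrite /= /GsA subnn /=; exact: En_lt. Qed.

Lemma ov_n_lt i (h : i.+1 < n) :
  ov_n i = castVl (esym (En_lt (ltnW h))) (castVr (esym (En_lt h)) (vp Yv h)).
Proof.
rewrite /ov_n; case: (ltnP i.+1 n) => [h'|h']; first by rewrite (bool_irrelevance h' h).
by exfalso; move: h'; rewrite leqNgt h.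
Qed.

Lemma comm_gen F (eF : F = 0) i (hi : i.+1 < n) (E1 : oE (colsO F) i = vA Yv i)
  (E2 : oE (colsO F) i.+1 = vA Yv i.+1) :
  compV (ov (colsO F) i) (isoV E2) = compV (isoV E1) (vp Yv hi).
Proof. subst F; rewrite /= ov_n_lt; exact: cast_nat. Qed.

Lemma comm_gen' F (eF : F = 0) i (hi : i.+1 < n) (E1 : oE (colsO F) i = vA Yv i)
  (E2 : oE (colsO F) i.+1 = vA Yv i.+1) :
  compV (vp Yv hi) (isoV (esym E2)) = compV (isoV (esym E1)) (ov (colsO F) i).
Proof. subst F; rewrite /= ov_n_lt; exact: cast_nat'. Qed.

Definition Ufwd : Vhom (U_obj GY) Yv.
Proof.
refine (@BuildVhom C n (U_obj GY) Yv (fun i hi => isoV (EU hi)) _ _ _).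
- move=> i hi; exact: vwe_isoV.
- move=> i hi; exact: (@comm_gen (n - n) (subnn n) i hi (EU (ltnW hi)) (EU hi)).
- by move=> i hi; apply: zV_eq.
Defined.

Definition Ubwd : Vhom Yv (U_obj GY).
Proof.
refine (@BuildVhom C n Yv (U_obj GY) (fun i hi => isoV (esym (EU hi))) _ _ _).
- move=> i hi; exact: vwe_isoV.
- move=> i hi; exact: (@comm_gen' (n - n) (subnn n) i hi (EU (ltnW hi)) (EU hi)).
- by move=> i hi; apply: zV_eq.
Defined.

Lemma U_iso1 : Vcomp Ufwd Ubwd = Vid (U_obj GY).
Proof. by apply: Vhom_ext => i hi /=; rewrite isoV_inv. Qed.
Lemma U_iso2 : Vcomp Ubwd Ufwd = Vid Yv.
Proof. by apply: Vhom_ext => i hi /=; rewrite isoV_inv'. Qed.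

End EsoY.

Lemma U_ff : fully_faithful (U_functor C n).
Proof.
move=> a b g; exists (liftS g); split; first exact: liftS_U.
move=> f' Ef'; apply: lift_unique => i hi.
have E1 := f_equal (fun z => vt z hi) Ef'.
have E2 := f_equal (fun z => vt z hi) (liftS_U g).
rewrite /= in E1 E2; by rewrite E1 -E2.
Qed.

Lemma U_es : ess_surj (U_functor C n).
Proof.
move=> d; exists (GY d); exists (Ufwd d), (Ubwd d); split.
- exact: U_iso1.
- exact: U_iso2.
Qed.

End NFixed.
End Core.


Theorem lemma3p26 (C : SquaresCat) (HC : isostable C) (n : nat) :
  is_equivalence (U_functor C n).
Proof.
case: HC => [[_ [ST]] [Hinv Hisq]].
apply: ff_es_equiv.
- exact: U_ff ST Hinv Hisq n.
- exact: U_es ST n.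
Qed.
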